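(* Let $A_\bullet$ be a simplicial commutative ring, and let $a,b\in N_n(A)$ and $c\in A_{n-1}$. Then: (1) $s_1s_0(c)\,m(a,b)\in N_{n+1}(A)$; (2) if $d_0(a)c=0=d_0(b)c$, then $s_1s_0(c)\,m(a,b)$ is a cycle; (3) if $d_0(a)c=0$ and $b$ is a boundary, then $s_1s_0(c)\,m(a,b)$ is a boundary.
   Context: For a simplicial ring $A_\bullet$ and $a,b\in A_n$ put $m(a,b)=s_0(a)s_1(b)-s_0(b)s_1(a)\in A_{n+1}$. $N_n(A)=\bigcap_{1\le i\le n}\ker(d_i:A_n\to A_{n-1})$ is the normalized chain complex with differential $d_0$; cycles and boundaries refer to this complex. *)

(* Defs.v *)
From HB Require Import structures.
From mathcomp Require Import all_boot all_algebra.
Unset Printing Implicit Defensive.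
Import GRing.Theory.
Local Open Scope ring_scope.

(* Out-of-range indices are unconstrained junk. *)
Record simplicial_comRing := SimplicialComRing {
  A :> nat -> comPzRingType;
  face : forall n : nat, nat -> A n.+1 -> A n;
  degen : forall n : nat, nat -> A n -> A n.+1;
  face_add : forall n i (x y : A n.+1), (i <= n.+1)%N -> face n i (x + y) = face n i x + face n i y;
  face_mul : forall n i (x y : A n.+1), (i <= n.+1)%N -> face n i (x * y) = face n i x * face n i y;
  face_one : forall n i, (i <= n.+1)%N -> face n i (1 : A n.+1) = 1;
  face_opp : forall n i (x : A n.+1), (i <= n.+1)%N -> face n i (- x) = - face n i x;
  degen_add : forall n i (x y : A n), (i <= n)%N -> degen n i (x + y) = degen n i x + degen n i y;
  degen_mul : forall n i (x y : A n), (i <= n)%N -> degen n i (x * y) = degen n i x * degen n i y;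
  degen_one : forall n i, (i <= n)%N -> degen n i (1 : A n) = 1;
  degen_opp : forall n i (x : A n), (i <= n)%N -> degen n i (- x) = - degen n i x;
  face_face : forall n i j (x : A n.+2), (i < j)%N -> (j <= n.+2)%N ->
      face n i (face n.+1 j x) = face n j.-1 (face n.+1 i x);
  face_degen_lt : forall n i j (x : A n.+1), (i < j)%N -> (j <= n.+1)%N ->
      face n.+1 i (degen n.+1 j x) = degen n j.-1 (face n i x);
  face_degen_eq : forall n j (x : A n), (j <= n)%N -> face n j (degen n j x) = x;
  face_degen_succ : forall n j (x : A n), (j <= n)%N -> face n j.+1 (degen n j x) = x;
  face_degen_gt : forall n i j (x : A n.+1), (j.+1 < i)%N -> (i <= n.+2)%N ->
      face n.+1 i (degen n.+1 j x) = degen n j (face n i.-1 x);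
  degen_degen : forall n i j (x : A n), (i <= j)%N -> (j <= n)%N ->
      degen n.+1 i (degen n j x) = degen n.+1 j.+1 (degen n i x)
}.

Arguments face {s} n i _.
Arguments degen {s} n i _.

Section Defs.
Variable S : simplicial_comRing.

Definition mab (n : nat) (a b : S n) : S n.+1 :=
  degen n 0 a * degen n 1 b - degen n 0 b * degen n 1 a.

Definition normalized (n : nat) (x : S n.+1) : Prop :=
  forall i : nat, (0 < i <= n.+1)%N -> face n i x = 0.

Definition is_cycle (n : nat) (x : S n.+1) : Prop :=
  normalized n x /\ face n 0 x = 0.

Definition is_boundary (n : nat) (x : S n.+1) : Prop :=
  exists y : S n.+2, normalized n.+1 y /\ face n.+1 0 y = x.
End Defs.
Arguments mab {S} n a b.
Arguments normalized {S} n x.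
Arguments is_cycle {S} n x.
Arguments is_boundary {S} n x.

(* Main.v *)
Require Import Defs.
From mathcomp Require Import all_boot all_algebra.
From mathcomp Require Import ring zify.
Local Open Scope ring_scope.
Import GRing.Theory.

Section H.
Variable S : simplicial_comRing.

Lemma dg0 n i : (i <= n)%N -> degen n i (0 : S n) = 0.
Proof. by move=> h; apply: (addrI (degen n i 0)); rewrite -degen_add // !addr0. Qed.

Lemma fc0 n i : (i <= n.+1)%N -> face n i (0 : S n.+1) = 0.
Proof. by move=> h; apply: (addrI (face n i 0)); rewrite -face_add // !addr0. Qed.

Lemma fc_sub n i (x y : S n.+1) : (i <= n.+1)%N -> face n i (x - y) = face n i x - face n i y.
Proof. by move=> h; rewrite face_add // face_opp. Qed.

Ltac fd := repeat first [ rewrite face_degen_eq; [|by []] | rewrite face_degen_succ; [|by []]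
  | rewrite face_degen_lt; [|by []|by []] | rewrite face_degen_gt; [|by []|by []] ].

Lemma norm_m n (e b : S n.+1) : normalized n e -> normalized n b -> normalized n.+1 (mab n.+1 e b).
Proof.
move=> he hb i /andP[i0 ile]; rewrite /mab fc_sub // !face_mul //.
case: i i0 ile => [|[|[|i]]] // _ ile.
- fd; by rewrite mulrC subrr.
- fd; by rewrite he // hb // dg0 // !mul0r subrr.
- rewrite !face_degen_gt //; try lia.
  by rewrite he ?hb ?dg0 ?mul0r ?subrr //; lia.
Qed.

Lemma d0_m n (e b : S n.+1) : face n.+1 0 (mab n.+1 e b) = e * degen n 0 (face n 0 b) - b * degen n 0 (face n 0 e).
Proof. by rewrite /mab fc_sub // !face_mul //; fd. Qed.

Lemma bnd_m n (e : S n.+1) (y : S n.+2) : normalized n e -> face n 0 e = 0 ->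
  normalized n.+1 y -> is_boundary n.+1 (mab n.+1 e (face n.+1 0 y)).
Proof.
move=> he he0 hy.
exists (degen n.+2 1 (degen n.+1 0 e) * degen n.+2 2 y - degen n.+2 1 y * degen n.+2 2 (degen n.+1 0 e)
  + degen n.+2 0 y * degen n.+2 2 (degen n.+1 1 e)).
split; last first.
  rewrite face_add // fc_sub // !face_mul //; fd.
  by rewrite he0 dg0 // dg0 // mulr0 addr0.
move=> i /andP[i0 ile]; rewrite face_add // fc_sub // !face_mul //.
case: i i0 ile => [|[|[|[|i]]]] // _ ile.
- fd. rewrite (hy 1) // dg0 // mulr0 sub0r. by rewrite addrC mulrC subrr.
- fd => /=. by rewrite (hy 1) // dg0 // mul0r addr0 mulrC subrr.
- fd => /=. by rewrite (he 1) // (hy 2) // !dg0 // ?mulr0 ?mul0r subrr addr0.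
- rewrite !face_degen_gt //; try lia.
  rewrite he ?hy ?dg0 ?mul0r ?mulr0 ?subrr ?addr0 //; lia.
Qed.
End H.

Theorem lemma3p2 (S : simplicial_comRing) (n : nat) (a b : S n.+1) (c : S n) :
  normalized n a -> normalized n b ->
  let x := degen n.+1 1 (degen n 0 c) * mab n.+1 a b in
  [/\ normalized n.+1 x,
      (face n 0 a * c = 0 -> face n 0 b * c = 0 -> is_cycle n.+1 x)
    & (face n 0 a * c = 0 -> is_boundary n b -> is_boundary n.+1 x)].
Proof.
move=> ha hb x.
set e := degen n 0 c * a.
have xE : x = mab n.+1 e b.
  rewrite /x /mab /e !degen_mul // -degen_degen //.
  set p := degen n.+1 0 (degen n 0 c); rewrite mulrBr; congr (_ - _); [exact: mulrA | exact: mulrCA].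
have he : normalized n e.
  by move=> i hi; rewrite /e face_mul ?ha ?mulr0 //; case/andP: hi.
have he0 : face n 0 a * c = 0 -> face n 0 e = 0.
  by move=> h; rewrite /e face_mul // face_degen_eq // mulrC.
rewrite xE; split.
- by apply: norm_m.
- move=> h1 h2; split; first by apply: norm_m.
  rewrite d0_m he0 // dg0 // mulr0 subr0 /e -mulrA mulrCA -degen_mul //.
  by rewrite [c * _]mulrC h2 dg0 // !mulr0.
- move=> h1 [y [hy <-]]; by apply: bnd_m => //; apply: he0.
Qed.
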